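(* $\mathrm{GL}_4(\mathbb{F}_3)$ does not contain a subgroup isomorphic to $A_5\times V_4$.
   Context: $V_4\cong C_2\times C_2$ is the Klein four-group. *)

(* Defs.v *)
From mathcomp Require Import all_boot all_order all_algebra all_fingroup all_solvable.
Set Implicit Arguments. Unset Strict Implicit. Unset Printing Implicit Defensive.

Definition A5 : {group {perm 'I_5}} := Alt_group 'I_5.

Definition V4 : {group ('Z_2 * 'Z_2)%type} := setX_group [set: 'Z_2]%G [set: 'Z_2]%G.

Definition A5xV4 : {group ({perm 'I_5} * ('Z_2 * 'Z_2))%type} := setX_group A5 V4.

(* Main.v *)
Set Warnings "-notation-overridden,-ambiguous-paths".
Require Import Defs.
From mathcomp Require Import all_boot all_order all_algebra all_fingroup all_solvable.
Set Implicit Arguments. Unset Strict Implicit. Unset Printing Implicit Defensive.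

Lemma cardA5xV4 : #|A5xV4| = 240.
Proof.
rewrite /A5xV4 /= cardsX.
have hA : #|A5| = 60.
  have := @card_Alt 'I_5; rewrite card_ord => /(_ isT).
  by move=> h; apply/eqP; rewrite -(eqn_pmul2l (isT : (0 < 2)%N)) h.
by rewrite hA cardsX !cardsT card_ord.
Qed.

Definition z1 : ({perm 'I_5} * ('Z_2 * 'Z_2))%type := (1%g, (inZp 1, inZp 0)).
Definition z2 : ({perm 'I_5} * ('Z_2 * 'Z_2))%type := (1%g, (inZp 0, inZp 1)).

Lemma z1_in : z1 \in A5xV4. Proof. by rewrite !inE /= morph1. Qed.
Lemma z2_in : z2 \in A5xV4. Proof. by rewrite !inE /= morph1. Qed.
Lemma pmulE (a b : ({perm 'I_5} * ('Z_2 * 'Z_2))%type) :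
  (a * b = (a.1 * b.1, a.2 * b.2))%g.
Proof. by []. Qed.
Lemma pmulE2 (a b : ('Z_2 * 'Z_2)%type) :
  (a * b = (a.1 * b.1, a.2 * b.2))%g.
Proof. by []. Qed.

Lemma z1_sq : (z1 * z1 = 1)%g. Proof.
rewrite /z1 pmulE /= mulg1 pmulE2 /=.
by apply/eqP; rewrite !xpair_eqE /=; apply/andP; split; apply/eqP; apply: val_inj.
Qed.
Lemma z2_sq : (z2 * z2 = 1)%g.
Proof.
rewrite /z2 pmulE /= mulg1 pmulE2 /=.
by apply/eqP; rewrite !xpair_eqE /=; apply/andP; split; apply/eqP; apply: val_inj.
Qed.
Lemma z1_ne : z1 != 1%g. Proof. by apply/eqP => /(congr1 (fun p : ({perm 'I_5} * ('Z_2 * 'Z_2))%type => val p.2.1)). Qed.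
Lemma z2_ne : z2 != 1%g. Proof. by apply/eqP => /(congr1 (fun p : ({perm 'I_5} * ('Z_2 * 'Z_2))%type => val p.2.2)). Qed.
Lemma z12 : z1 != z2. Proof. by apply/eqP => /(congr1 (fun p : ({perm 'I_5} * ('Z_2 * 'Z_2))%type => val p.2.1)). Qed.
Lemma zcomm (x : ({perm 'I_5} * ('Z_2 * 'Z_2))%type) (z : ({perm 'I_5} * ('Z_2 * 'Z_2))%type) :
  z.1 = 1%g -> commute x z.
Proof.
case: z => a [b c] /= ->; case: x => p [q r].
rewrite /commute !pmulE /= mulg1 mul1g !pmulE2 /=.
by congr (_, (_, _)); apply: Zp_addC.
Qed.
Import GRing.Theory.
Local Open Scope ring_scope.
Local Notation F := 'F_3.

Lemma small_pow (d : nat) (B : 'M[F]_d) : (d <= 3)%N -> B ^+ 5 = 1 -> B = 1.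
Proof.
case: d B => [|n] B hd h5; first by rewrite [B]flatmx0 [1 : 'M_0]flatmx0.
have Bu : B \is a GRing.unit.
  by apply/unitrP; exists (B ^+ 4); rewrite -exprS -exprSr h5.
pose g : {'GL_n.+1[F]} := FinRing.unit _ Bu.
have g5 : (g ^+ 5 = 1)%g.
  by apply: val_inj => /=; rewrite -h5 !exprS expr0 mulr1.
have o1 : #[g]%g = 1%N.
  have h1 : (#[g]%g %| 5)%N by rewrite order_dvdn g5.
  have : (#[g]%g %| #|'GL_n.+1[F]%g|)%N by apply: order_dvdG; rewrite inE.
  rewrite card_GL // card_Fp //.
  have h6 := dvdn_leq (isT : (0 < 5)%N) h1.
  move: h1 h6; case: (#[g]%g) => [|[|[|[|[|[|k]]]]]] // _ _.
  move: hd; rewrite ltnS; case: n {h5 B Bu g g5}=> [|[|[|]]] // _; by rewrite /index_iota /= !big_cons big_nil.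
have : g = 1%g by apply/eqP; rewrite -order_eq1 o1.
by move/(congr1 val).
Qed.

Lemma restr_fix (U : 'M[F]_4) (A : 'M[F]_4) :
  (U *m A <= U)%MS -> (\rank U <= 3)%N -> A ^+ 5 = 1 -> U *m A = U.
Proof.
move=> UA rU A5.
set R := row_base U.
pose B := R *m A *m pinvmx R.
have RA : (R *m A <= R)%MS.
  rewrite (eq_row_base U); apply: submx_trans UA.
  by apply: submxMr; rewrite eq_row_base.
have BR : B *m R = R *m A by rewrite /B mulmxKpV.
have BkR : forall k, B ^+ k *m R = R *m A ^+ k.
  elim=> [|k IH]; first by rewrite !expr0 mul1mx mulmx1.
  by rewrite exprS -mulmxE -mulmxA IH mulmxA BR -mulmxA mulmxE -exprS.
have B5 : B ^+ 5 = 1.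
  apply: (row_free_inj (row_base_free U)) => /=.
  by rewrite BkR A5 mulmx1 -idmxE mul1mx.
have B1 := small_pow rU B5.
have RA1 : R *m A = R by rewrite -BR B1 -idmxE mul1mx.
have : (U <= R)%MS by rewrite eq_row_base.
by case/submxP=> D ->; rewrite -mulmxA RA1.
Qed.

Lemma three0 : (1 + 1 + 1 : 'M[F]_4) = 0.
Proof. by apply/matrixP=> i j; rewrite !mxE; case: (i == j); apply/eqP. Qed.

Lemma mat_main (M Z : 'M[F]_4) :
  M ^+ 5 = 1 -> Z * Z = 1 -> M * Z = Z * M -> Z != 1 -> Z != -1 -> M = 1.
Proof.
move=> M5 ZZ MZ Z1 Zm1.
have stab : forall c : 'M[F]_4, c * M = M * c -> (kermx c *m M <= kermx c)%MS.
  move=> c cM; apply/sub_kermxP.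
  by rewrite -mulmxA mulmxE -cM -mulmxE mulmxA mulmx_ker mul0mx.
have rk : forall c : 'M[F]_4, c != 0 -> (\rank (kermx c) <= 3)%N.
  move=> c; apply: contraNT; rewrite -ltnNge => r4.
  have : (1%:M <= kermx c)%MS.
    apply: submx_full; rewrite /row_full eqn_leq rank_leq_col; exact: r4.
  by move/sub_kermxP; rewrite mul1mx => ->.
have c1M : (Z - 1) * M = M * (Z - 1) by rewrite mulrBl mulrBr MZ mul1r mulr1.
have c2M : (Z + 1) * M = M * (Z + 1) by rewrite mulrDl mulrDr MZ mul1r mulr1.
have n1 : Z - 1 != 0 by rewrite subr_eq0.
have n2 : Z + 1 != 0 by rewrite addr_eq0.
have e1 := restr_fix (stab _ c1M) (rk _ n1) M5.
have e2 := restr_fix (stab _ c2M) (rk _ n2) M5.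
have s1 : (- (1 + Z) <= kermx (Z - 1))%MS.
  apply/sub_kermxP; rewrite mulmxE mulNr mulrBr !mulrDl ZZ mul1r mulr1.
  by rewrite mulr1 [1 + Z]addrC subrr oppr0.
have s2 : (Z - 1 <= kermx (Z + 1))%MS.
  apply/sub_kermxP; rewrite mulmxE mulrBl !mulrDr ZZ mul1r mulr1.
  by rewrite mulr1 [Z + 1]addrC subrr.
have dec : (1 : 'M[F]_4) = - (1 + Z) + (Z - 1).
  apply/eqP; rewrite -subr_eq0; apply/eqP.
  rewrite opprD opprK opprD addrA.
  rewrite opprK addrA addrA -(addrA (1 + 1) Z (- Z)) subrr addr0; exact: three0.
case/submxP: s1 => X hX; case/submxP: s2 => Y hY.
have f1 : - (1 + Z) *m M = - (1 + Z) by rewrite {1}hX -mulmxA e1 -hX.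
have f2 : (Z - 1) *m M = Z - 1 by rewrite {1}hY -mulmxA e2 -hY.
by rewrite -[M]mul1r dec -mulmxE mulmxDl f1 f2.
Qed.

Lemma GLexp (u : {'GL_4[F]}) n : GLval (u ^+ n)%g = (GLval u) ^+ n.
Proof.
elim: n => [|n IH]; first by rewrite expg0 expr0.
by rewrite expgS GL_ME IH exprS.
Qed.

Theorem lemma3p15 :
  ~ (exists H : {group {'GL_4['F_3]}},
       (H \subset 'GL_4['F_3])%g /\ (H \isog A5xV4)%g).
Proof.
case=> H [_ iso].
have : (A5xV4 \isog H)%g by rewrite isog_sym.
case/isogP=> f injf _.
have [x xG ox] : {x | x \in A5xV4 & #[x]%g = 5%N}.
  by apply: Cauchy => //; rewrite cardA5xV4.
have f1 : forall y, y \in A5xV4 -> GLval (f y) = 1 -> y = 1%g.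
  move=> y yG fy; apply/eqP; rewrite -(morph_injm_eq1 injf yG).
  by apply/eqP; apply: val_inj; rewrite /= fy.
have fM : forall y, y \in A5xV4 -> commute x y ->
    GLval (f x) * GLval (f y) = GLval (f y) * GLval (f x).
  by move=> y yG cxy; rewrite -!GL_ME -!morphM // cxy.
have fsq : forall y, y \in A5xV4 -> (y * y = 1)%g -> GLval (f y) * GLval (f y) = 1.
  by move=> y yG yy; rewrite -GL_ME -morphM // yy morph1.
have M5 : GLval (f x) ^+ 5 = 1.
  have x5 : (x ^+ 5 = 1)%g by have := expg_order x; rewrite ox.
  by rewrite -GLexp -morphX // x5 morph1.
have Mne : GLval (f x) != 1.
  apply/eqP => /(f1 _ xG) x1; move: ox; rewrite x1 order1.
  by [].
have key : forall y, y \in A5xV4 -> (y * y = 1)%g -> y != 1%g -> y.1 = 1%g ->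
    GLval (f y) != -1 -> False.
  move=> y yG yy y1 yp ym; move/eqP: Mne; apply.
  apply: (mat_main M5 (fsq _ yG yy) (fM _ yG (zcomm _ yp))) => //.
  by apply/eqP => /(f1 _ yG) /eqP; apply/negP.
have [e1|ne1] := eqVneq (GLval (f z1)) (-1).
  apply: (key _ z2_in z2_sq z2_ne erefl); apply/eqP => e2.
  have : f z1 = f z2 by apply: val_inj; rewrite /= e1 e2.
  by move/(injmP injf _ _ z1_in z2_in)/eqP; apply/negP; apply: z12.
exact: (key _ z1_in z1_sq z1_ne erefl ne1).
Qed.
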